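(* For every prime $p$ and every integer $k>1$, $cw(\mathrm{Syl}_p(S_{p^k}))=1$. For every prime $p>2$ and every integer $k>1$, $cw(\mathrm{Syl}_p(A_{p^k}))=1$.
   Context: $\mathrm{Syl}_p(G)$ denotes a Sylow $p$-subgroup of $G$; $S_n$, $A_n$ are the symmetric and alternating groups. The commutator width $cw(G)$ is the least $n$ such that every element of $G'$ is a product of at most $n$ commutators. *)

(* Defs.v *)
From mathcomp Require Import all_boot all_fingroup all_solvable.
Set Implicit Arguments. Unset Strict Implicit. Unset Printing Implicit Defensive.
Local Open Scope group_scope.

Definition prod_comm_le (gT : finGroupType) (G : {set gT}) (n : nat) (x : gT) : Prop :=
  exists s : seq (gT * gT),
    [/\ (size s <= n)%N,
        all (fun ab => (ab.1 \in G) && (ab.2 \in G)) s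
      & x = \prod_(ab <- s) [~ ab.1, ab.2]].

Definition cw_bound (gT : finGroupType) (G : {set gT}) (n : nat) : Prop :=
  forall x, x \in G^`(1) -> prod_comm_le G n x.

Definition commutator_width (gT : finGroupType) (G : {set gT}) (n : nat) : Prop :=
  cw_bound G n /\ forall m, cw_bound G m -> (n <= m)%N.

(* Main.v *)
Require Import Defs.
From mathcomp Require Import all_boot all_fingroup all_solvable.
From mathcomp Require Import ssralg zmodp zify.
Set Implicit Arguments. Unset Strict Implicit. Unset Printing Implicit Defensive.
Local Open Scope group_scope.

Module Aux.
Import GRing.Theory.
Section Wreath.
Variables (q : nat) (X : finType) (x0 : X) (H : {group {perm X}}).
Local Notation p := q.+1.
Local Notation Y := ('I_p * X)%type.

Definition wrf (s : 'I_p) (c : 'I_p -> {perm X}) (y : Y) : Y :=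
  ((y.1 + s)%R, c y.1 y.2).

Lemma wrf_inj s c : injective (wrf s c).
Proof.
move=> [r x] [r' x'] E.
have /addIr er : (r + s = r' + s)%R := congr1 fst E.
have E2 : c r x = c r' x' := congr1 snd E.
by subst r'; rewrite (perm_inj E2).
Qed.

Definition wr s c : {perm Y} := perm (@wrf_inj s c).

Lemma wrE s c r x : wr s c (r, x) = ((r + s)%R, c r x).
Proof. by rewrite permE. Qed.

Lemma wrM s t c d :
  wr s c * wr t d = wr (s + t)%R (fun r => c r * d (r + s)%R).
Proof. by apply/permP => -[r x]; rewrite permM !wrE permM addrA. Qed.

Lemma eq_wr s t c d : s = t -> c =1 d -> wr s c = wr t d.
Proof. by move=> -> E; apply/permP => -[r x]; rewrite !wrE E. Qed.

Lemma wr1 : wr 0%R (fun _ => 1) = 1.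
Proof. by apply/permP => -[r x]; rewrite wrE addr0 !perm1. Qed.

Lemma wrV s c : (wr s c)^-1 = wr (- s)%R (fun r => (c (r - s)%R)^-1).
Proof.
apply/eqP; rewrite eq_invg_mul wrM -wr1; apply/eqP/eq_wr; first by rewrite subrr.
by move=> r; rewrite addrK mulgV.
Qed.

Definition Fset := [set c : {ffun 'I_p -> {perm X}} | [forall r, c r \in H]].
Definition W := [set wr sc.1 (sc.2 : {ffun _ -> _}) | sc in setX [set: 'I_p] Fset].

Lemma wr_in s c : (forall r, c r \in H) -> wr s c \in W.
Proof.
move=> Hc; apply/imsetP; exists (s, finfun c).
  by rewrite !inE /=; apply/forallP => r; rewrite ffunE.
by apply: eq_wr => // r; rewrite ffunE.
Qed.

Lemma W_inv g : g \in W -> exists s c, (forall r, c r \in H) /\ g = wr s c.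
Proof.
case/imsetP => -[s c]; rewrite !inE /= => /forallP Hc ->.
by exists s, c.
Qed.

Lemma W_group_set : group_set W.
Proof.
apply/group_setP; split; first by rewrite -wr1; apply: wr_in => r; exact: group1.
move=> g h /W_inv[s [c [Hc ->]]] /W_inv[t [d [Hd ->]]].
by rewrite wrM; apply: wr_in => r; rewrite groupM.
Qed.

Canonical Wg := Group W_group_set.

Lemma wr_inj s t c d : wr s c = wr t d -> s = t /\ c =1 d.
Proof.
move=> E.
have Es : s = t.
  have := congr1 (fun g : {perm Y} => (g (0%R, x0)).1) E.
  by rewrite /= !wrE /= !add0r.
split=> // r; apply/permP => x.
have := congr1 (fun g : {perm Y} => (g (r, x)).2) E.
by rewrite /= !wrE.
Qed.

Lemma card_W : #|W| = (p * #|H| ^ p)%N.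
Proof.
rewrite card_in_imset; last first.
  move=> [s c] [t d] _ _ /= /wr_inj [-> E].
  by congr (_, _); apply/ffunP => r; apply: E.
rewrite cardsX cardsT card_ord; congr (_ * _)%N.
rewrite -[in RHS](card_ord p) -card_ffun_on; apply: eq_card => c.
rewrite !inE; apply/forallP/ffun_onP => //.
Qed.

Definition top (g : {perm Y}) : 'I_p := (g (0%R, x0)).1.
Lemma topE s c : top (wr s c) = s.
Proof. by rewrite /top wrE /= add0r. Qed.

Definition comp (g : {perm Y}) r : {perm X} :=
  odflt 1 [pick h in H | [forall x, (g (r, x)).2 == h x]].

Lemma compE s c r : c r \in H -> comp (wr s c) r = c r.
Proof.
move=> Hc; rewrite /comp; case: pickP => [h /andP[_ /forallP E]|/(_ (c r))].
  by apply/permP => x; have /eqP := E x; rewrite wrE /=.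
by rewrite Hc /=; move/negbT/negP; case; apply/forallP => x; rewrite wrE.
Qed.

Let abHH : abelian (H / H^`(1)) := der_abelian 0 H.
Import FiniteModule.

Definition Theta g : fmod_of abHH :=
  (\sum_(r < p) fmod abHH (coset H^`(1) (comp g r)))%R.

Lemma ThetaE s c : (forall r, c r \in H) ->
  Theta (wr s c) = (\sum_(r < p) fmod abHH (coset H^`(1) (c r)))%R.
Proof. by move=> Hc; apply: eq_bigr => r _; rewrite compE. Qed.

Lemma nHH : H \subset 'N(H^`(1)).
Proof. exact: der_norm. Qed.

Lemma ThetaM g h : g \in W -> h \in W -> Theta (g * h) = (Theta g + Theta h)%R.
Proof.
move=> /W_inv[s [c [Hc ->]]] /W_inv[t [d [Hd ->]]].
rewrite wrM !ThetaE // => [|r]; last by rewrite groupM.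
rewrite (@reindex_inj _ _ _ _ _ xpredT (fun r => fmod abHH (coset H^`(1) (d r))) (addIr s)) /=.
rewrite -big_split /=.
apply: eq_bigr => r _.
rewrite morphM ?(subsetP nHH) // fmodM // mem_quotient //.
Qed.

Lemma topM g h : g \in W -> h \in W -> top (g * h) = (top g + top h)%R.
Proof.
move=> /W_inv[s [c [Hc ->]]] /W_inv[t [d [Hd ->]]].
by rewrite wrM !topE.
Qed.

Lemma Theta1 : Theta 1 = 0%R.
Proof.
rewrite -wr1 ThetaE => [|r]; last exact: group1.
by rewrite big1 // => r _; rewrite morph1 fmod1.
Qed.

Lemma top1 : top 1 = 0%R.
Proof. by rewrite -wr1 topE. Qed.

Lemma ThetaV g : g \in W -> Theta g^-1 = (- Theta g)%R.
Proof.
move=> Wg; apply/eqP; rewrite -(inj_eq (addrI (Theta g))) subrr -ThetaM ?groupV //.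
by rewrite mulgV Theta1.
Qed.

Lemma topV g : g \in W -> top g^-1 = (- top g)%R.
Proof.
move=> Wg; apply/eqP; rewrite -subr_eq0 opprK addrC -topM ?groupV //.
by rewrite mulgV top1.
Qed.

Definition K := [set g in W | (top g == 0%R) && (Theta g == 0%R)].

Lemma K_group_set : group_set K.
Proof.
apply/group_setP; split.
  by rewrite !inE group1 top1 Theta1 !eqxx.
move=> g h; rewrite !inE => /and3P[Wg /eqP tg /eqP Tg] /and3P[Wh /eqP th /eqP Th].
by rewrite groupM // topM // ThetaM // tg th Tg Th !addr0 !eqxx.
Qed.

Canonical Kg := Group K_group_set.

Lemma derW_K : Wg^`(1) \subset K.
Proof.
rewrite /= gen_subG; apply/subsetP => _ /imset2P[a b Wa Wb ->].
have Wab : [~ a, b] \in W by rewrite groupR.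
rewrite !inE Wab /= commgEl conjgE !topM ?ThetaM ?topV ?ThetaV; 
  try by rewrite ?(@groupM _ Wg) ?(@groupV _ Wg).
by rewrite (addrC (top a)) (addrC (Theta a)) !addKr !addNr !eqxx.
Qed.

Lemma wr_commE t x y :
  [~ wr 0%R x, wr t y] = wr 0%R (fun r => (x r)^-1 * (x (r - t)%R) ^ (y (r - t)%R)).
Proof.
rewrite commgEl conjgE !wrV !wrM; apply: eq_wr => [|r].
  by rewrite oppr0 !add0r addNr.
by rewrite !subr0 !addr0 conjgE !mulgA.
Qed.


Lemma cw1_W :
  (forall g, g \in H^`(1) -> exists u v, [/\ u \in H, v \in H & g = [~ u, v]]) ->
  forall g, g \in Wg^`(1) -> exists a b, [/\ a \in W, b \in W & g = [~ a, b]].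
Proof.
move=> cwH g /(subsetP derW_K); rewrite !inE => /and3P[/W_inv[s [c [Hc ->]]] ts TS].
rewrite topE in ts; move/eqP: ts => ts; subst s.
rewrite ThetaE // in TS.
have Pin : \prod_(r < p) c r \in H^`(1).
  apply: coset_idr; first by apply: (subsetP nHH); apply: group_prod => r _.
  rewrite morph_prod => [|r _]; last by rewrite (subsetP nHH).
  transitivity (fmval (0 : fmod_of abHH))%R; last exact: fmval0.
  rewrite -(eqP TS) fmval_sum.
  by apply: eq_bigr => r _; rewrite fmodK // mem_quotient.
have [u [v [Hu Hv Euv]]] := cwH _ Pin.
pose x (r : 'I_p) := u * \prod_(0 <= i < r) c (inord i).
pose y (r : 'I_p) := if r == 0%R then v else 1.
exists (wr 0%R x), (wr (- inZp 1)%R y); split.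
- by apply: wr_in => r; rewrite groupM // group_prod // => i _.
- by apply: wr_in => r; rewrite /y; case: (r == 0%R).
rewrite wr_commE; apply: eq_wr => // r; rewrite opprK.
have Ep : \prod_(i < p) c i = \prod_(0 <= i < q.+1) c (inord i).
  by rewrite big_mkord; apply: eq_bigr => i _; rewrite inord_val.
rewrite big_nat_recr //= in Ep.
have v1 : val ((r + inZp 1)%R : 'I_p) = (r.+1 %% p)%N by rewrite /= modnDmr addn1.
have [rq | rq] := ltnP r q.
  rewrite modn_small // in v1.
  have -> : y (r + inZp 1)%R = 1.
    rewrite /y; case: eqP => // E; move: v1; rewrite E //.
  rewrite conjg1 /x v1 big_nat_recr //= inord_val.
  by rewrite [u * (_ * _)]mulgA mulKg.
have Er : val r = q by apply/eqP; rewrite eqn_leq rq -ltnS ltn_ord.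
have E0 : (r + inZp 1)%R = 0%R :> 'I_p.
  by apply: val_inj; rewrite v1 Er modnn.
rewrite E0 /y eqxx /x /= [\prod_(0 <= i < 0) _]big_geq // mulg1 Er.
have Ecr : c (inord q) = c r by congr c; apply: val_inj; rewrite /= inordK // Er.
rewrite Ecr Euv in Ep.
by rewrite invMg -mulgA -commgEl Ep mulKg.
Qed.

Lemma W_der_nontriv : (1 < p)%N -> H :!=: 1 -> exists2 g, g \in Wg^`(1) & g != 1.
Proof.
move=> p1 /trivgPn[h Hh nh].
pose x (r : 'I_p) := if r == 0%R then h else 1.
have Wa : wr 0%R x \in W by apply: wr_in => r; rewrite /x; case: (r == 0%R).
have Wb : wr (- inZp 1)%R (fun _ => 1) \in W by apply: wr_in => r.
exists [~ wr 0%R x, wr (- inZp 1)%R (fun _ => 1)]; first exact: mem_commg.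
rewrite wr_commE; apply/eqP => E; rewrite -wr1 in E.
case/wr_inj: E => _ /(_ 0%R); rewrite /x /= opprK add0r.
have -> : ((inZp 1 : 'I_p) == 0%R) = false.
  by apply/eqP => /(congr1 val) /=; rewrite modn_small.
rewrite conjg1 mulg1 => /eqP; rewrite invg_eq1 => /eqP hE.
by rewrite hE eqxx in nh.
Qed.

End Wreath.
Local Open Scope nat_scope.
Lemma sum_ext p n N : 1 < p -> n <= N ->
  \sum_(1 <= j < N.+1) n %/ p ^ j = \sum_(1 <= j < n.+1) n %/ p ^ j.
Proof.
move=> p1 nN.
rewrite (big_cat_nat _ (n:=n.+1)) //= ?ltnS //.
rewrite [X in _ + X]big1_seq ?addn0 // => j /andP[_]; rewrite mem_index_iota => /andP[nj _].
apply: divn_small; apply: leq_trans (ltn_expl n p1) _.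
by rewrite leq_pexp2l // ltnW.
Qed.

Lemma logn_fact_mul p m : prime p -> logn p (p * m)`! = m + logn p m`!.
Proof.
move=> pp; have p1 := prime_gt1 pp; have p0 := prime_gt0 pp.
case: m => [|m]; first by rewrite muln0.
rewrite !logn_fact // big_add1 /=.
have -> : \sum_(0 <= i < p * m.+1) (p * m.+1) %/ p ^ i.+1
        = \sum_(0 <= i < p * m.+1) m.+1 %/ p ^ i.
  by apply: eq_bigr => i _; rewrite expnS divnMl.
have pm : p * m.+1 = (p * m.+1).-1.+1 by rewrite prednK // muln_gt0 p0.
rewrite pm big_ltn // expn0 divn1 sum_ext //.
rewrite -ltnS -pm; nia.
Qed.


Fixpoint ee q k := if k is k'.+1 then (q.+1 * ee q k').+1 else 0.

Lemma ee_pow q k : q * ee q k + 1 = q.+1 ^ k.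
Proof. elim: k => [|k IH] /=; first by rewrite muln0. rewrite expnS -IH; nia. Qed.

Lemma logn_ee q k : prime q.+1 -> logn q.+1 (q.+1 ^ k)`! = ee q k.
Proof.
move=> pp; elim: k => [|k IH]; first by rewrite expn0 logn1.
rewrite expnS logn_fact_mul // IH /= -ee_pow; nia.
Qed.
Local Open Scope group_scope.
Section Tower.
Variable q : nat.
Local Notation p := q.+1.

Fixpoint T k : finType := if k is k'.+1 then ('I_p * T k')%type else unit.

Fixpoint tdef k : T k := match k return T k with 0 => tt | k'.+1 => (ord0, tdef k') end.

Fixpoint Qg k : {group {perm T k}} :=
  match k return {group {perm T k}} with
  | 0 => 1%G
  | k'.+1 => Wg q (Qg k')
  end.

Lemma card_T k : #|T k| = (p ^ k)%N.
Proof. by elim: k => [|k IH] /=; rewrite ?card_unit // card_prod card_ord IH expnS. Qed.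

Lemma card_Qg k : #|Qg k| = (p ^ ee q k)%N.
Proof.
elim: k => [|k IH] /=; first by rewrite cards1.
by rewrite (card_W q (tdef k)) IH -expnM -expnS mulnC.
Qed.

Definition cw1 (gT : finGroupType) (G : {set gT}) :=
  forall g, g \in G^`(1) -> exists u v, [/\ u \in G, v \in G & g = [~ u, v]].

Lemma cw1_Qg k : cw1 (Qg k).
Proof.
elim: k => [|k IH] /=.
  move=> g; rewrite (trivgP (der_sub 1 _)) => /set1P ->.
  by exists 1, 1; rewrite comm1g group1.
exact: (cw1_W (tdef k)).
Qed.

Lemma Qg_nontriv k : (1 < p)%N -> (1 < k)%N -> exists2 g, g \in (Qg k)^`(1) & g != 1.
Proof.
move=> p1; case: k => [|[|k]] // _ /=.
apply: (W_der_nontriv (tdef k.+1)) => //.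
rewrite -cardG_gt1 card_Qg /= -(expn0 p) ltn_exp2l //.
Qed.
End Tower.
Section Transfer.
Variables (T : finType) (n : nat) (cT : #|T| = n).

Definition ee1 (t : T) : 'I_n := cast_ord cT (enum_rank t).
Definition ee2 (i : 'I_n) : T := enum_val (cast_ord (esym cT) i).
Lemma ee1K : cancel ee1 ee2.
Proof. by move=> t; rewrite /ee1 /ee2 cast_ordK enum_rankK. Qed.
Lemma ee2K : cancel ee2 ee1.
Proof. by move=> i; rewrite /ee1 /ee2 enum_valK cast_ordKV. Qed.

Lemma phif_inj (g : {perm T}) : injective (ee1 \o g \o ee2).
Proof.
apply: inj_comp; last exact: (can_inj ee2K).
apply: inj_comp; [exact: (can_inj ee1K) | exact: perm_inj].
Qed.

Definition phi (g : {perm T}) : {perm 'I_n} := perm (@phif_inj g).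

Lemma phiM : {in [set: {perm T}] &, {morph phi : x y / x * y}}.
Proof. by move=> g h _ _; apply/permP => i; rewrite !permM !permE /= ee1K permM. Qed.

Canonical phim := Morphism phiM.

Lemma injm_phi : 'injm phim.
Proof.
apply/injmP => g h _ _ E; apply/permP => t.
have := congr1 (fun s : {perm 'I_n} => s (ee1 t)) E.
by rewrite /= !permE /= ee1K => /(can_inj ee1K).
Qed.
End Transfer.

Lemma cw1_morphim (aT rT : finGroupType) (D : {group aT})
  (f : {morphism D >-> rT}) (G : {group aT}) :
  G \subset D -> cw1 G -> cw1 (f @* G).
Proof.
move=> sGD cwG g; rewrite -morphim_der // => /morphimP[x Dx Gx ->].
have [u [v [Gu Gv ->]]] := cwG x Gx.
exists (f u), (f v); rewrite !mem_morphim ?(subsetP sGD) //.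
by split=> //; rewrite morphR // (subsetP sGD).
Qed.

Lemma nontriv_morphim (aT rT : finGroupType) (D : {group aT})
  (f : {morphism D >-> rT}) (G : {group aT}) :
  'injm f -> G \subset D -> (exists2 g, g \in G^`(1) & g != 1) ->
  exists2 g, g \in (f @* G)^`(1) & g != 1.
Proof.
move=> inj sGD [g Gg ng]; have Dg : g \in D.
  by apply: (subsetP sGD); apply: (subsetP (der_sub 1 G)).
exists (f g); first by rewrite -morphim_der // mem_morphim.
by rewrite morph_injm_eq1.
Qed.

Lemma cw1_conj (gT : finGroupType) (G : {group gT}) x :
  cw1 G -> cw1 (G :^ x).
Proof.
move=> cwG g; rewrite derJ mem_conjg => /cwG[u [v [Gu Gv E]]].
exists (u ^ x), (v ^ x); rewrite !memJ_conjg; split=> //.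
by rewrite -conjRg -E conjgKV.
Qed.

Lemma nontriv_conj (gT : finGroupType) (G : {group gT}) x :
  (exists2 g, g \in G^`(1) & g != 1) -> exists2 g, g \in (G :^ x)^`(1) & g != 1.
Proof.
move=> [g Gg ng]; exists (g ^ x); first by rewrite derJ memJ_conjg.
by rewrite conjg_eq1.
Qed.

Lemma cw_of (gT : finGroupType) (G : {group gT}) :
  cw1 G -> (exists2 g, g \in G^`(1) & g != 1) -> commutator_width G 1.
Proof.
move=> cwG [g Gg ng]; split.
  move=> x /cwG[u [v [Gu Gv ->]]]; exists [:: (u, v)].
  by rewrite big_seq1 /= Gu Gv.
move=> [|m] // cb; have [s [sz _ E]] := cb g Gg.
by case: s sz E => // _ E; rewrite E big_nil eqxx in ng.
Qed.
End Aux.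
Import Aux.
Theorem corollary4 (p k : nat) (hp : prime p) (hk : (1 < k)%N) :
  (forall P : {group 'S_(p ^ k)},
      P \in 'Syl_p([set: 'S_(p ^ k)]) -> commutator_width P 1)
  /\ ((2 < p)%N -> forall P : {group 'S_(p ^ k)},
      P \in 'Syl_p('Alt_('I_(p ^ k))) -> commutator_width P 1).
Proof.
case: p hp => [//|q] hp.
have part1 : forall P : {group 'S_(q.+1 ^ k)},
    P \in 'Syl_q.+1([set: 'S_(q.+1 ^ k)]) -> commutator_width P 1.
  move=> P sylP.
  pose Q := (phim (card_T q k) @* Qg q k)%G.
  have sylQ : Q \in 'Syl_q.+1([set: 'S_(q.+1 ^ k)]).
    rewrite inE; apply/pHallP; split; first exact: subsetT.
    rewrite card_injm ?injm_phi ?subsetT // card_Qg cardsT card_Sn p_part logn_ee //.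
  move: sylQ sylP; rewrite !inE => sylQ sylP.
  have [x _ PE] := Sylow_trans sylQ sylP.
  rewrite PE; apply: (@cw_of _ (Q :^ x)%G).
    by apply: cw1_conj; apply: cw1_morphim; [exact: subsetT | exact: cw1_Qg].
  apply: nontriv_conj; apply: nontriv_morphim; [exact: injm_phi | exact: subsetT |].
  by apply: Qg_nontriv => //; exact: prime_gt1.
split=> // p2 P sylP; apply: part1; rewrite inE; apply/pHallP; split.
  exact: subsetT.
move: sylP; rewrite inE => /pHallP[_ ->].
have n1 : (1 < #|'I_(q.+1 ^ k)|)%N.
  by rewrite card_ord -(expn0 q.+1) ltn_exp2l ?prime_gt1 // ltnW.
have E := card_Alt n1; rewrite card_ord in E.
rewrite cardsT card_Sn -E partnM //.
by rewrite [(2`_ _)%N]part_p'nat ?mul1n // p'natE // gtnNdvd.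


Qed.
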